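(* There exist (connected) bipartite graphs $G$ and integers $k$ with $k-1\ge\chi(G)$ for which $\mathrm{sn}(G,k)<\mathrm{sn}(G,k-1)$; that is, $\mathrm{sn}(G,k)$ is not in general monotone non-decreasing in $k$.
   Context: All graphs are finite and simple. For a graph $G=(V,E)$ and an integer $k\ge\chi(G)$, a proper $k$-colouring is a map $c:V\to[k]$ with $c(u)\neq c(v)$ for every edge $uv$. $\mathrm{sn}(G,k)$ is the minimum number of vertices of $G$ that have to be coloured in a partial colouring such that there exists a unique proper $k$-colouring of $G$ extending it. *)

(* Defs.v *)
From mathcomp Require Import all_boot.
Set Implicit Arguments. Unset Strict Implicit. Unset Printing Implicit Defensive.

Definition simple_graph (T : finType) (e : rel T) : Prop :=
  symmetric e /\ irreflexive e.

Definition proper_col (T : finType) (e : rel T) (k : nat) (c : {ffun T -> 'I_k}) : bool :=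
  [forall u, forall v, e u v ==> (c u != c v)].

Definition colourable (T : finType) (e : rel T) (k : nat) : bool :=
  [exists c : {ffun T -> 'I_k}, proper_col e c].

(* chromatic number: least k admitting a proper k-colouring
   (k = #|T| always works, so the bound #|T| is never a default value) *)
Definition chi (T : finType) (e : rel T) : nat :=
  \big[minn/#|T|]_(k < #|T|.+1 | colourable e k) (k : nat).

Definition bipartite (T : finType) (e : rel T) : Prop :=
  exists f : T -> bool, forall u v, e u v -> f u != f v.

Definition connected_graph (T : finType) (e : rel T) : Prop :=
  forall u v : T, connect e u v.

Definition extends (T : finType) (k : nat) (S : {set T}) (p c : {ffun T -> 'I_k}) : bool :=
  [forall x in S, c x == p x].

Definition uniquely_extends (T : finType) (e : rel T) (k : nat)
    (S : {set T}) (p : {ffun T -> 'I_k}) : bool :=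
  #|[set c : {ffun T -> 'I_k} | proper_col e c && extends S p c]| == 1.

Definition defining_set (T : finType) (e : rel T) (k : nat) (S : {set T}) : bool :=
  [exists p : {ffun T -> 'I_k}, uniquely_extends e S p].

(* sn(G,k): minimum size of a defining set (for k >= chi(G) the full vertex
   set is a defining set, so the default #|T| is never used there) *)
Definition sn (T : finType) (e : rel T) (k : nat) : nat :=
  \big[minn/#|T|]_(S : {set T} | defining_set e k S) #|S|.

(* Main.v *)
Require Import Defs.
From mathcomp Require Import all_boot.
Set Implicit Arguments. Unset Strict Implicit. Unset Printing Implicit Defensive.
Notation V := (bool * 'I_4 * 'I_3)%type.
Definition E : rel V := fun u v => (u.1.1 != v.1.1) && (u.1.2 != v.1.2).

Lemma card_side (s : bool) : 12 <= #|[set ((s, p.1, p.2) : V) | p : 'I_4 * 'I_3]|.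
Proof.
rewrite card_imset; first by rewrite card_prod !card_ord.
by move=> [i a] [j b] /= [-> ->].
Qed.
Lemma card_idx (m : 'I_4) : 6 <= #|[set ((p.1, m, p.2) : V) | p : bool * 'I_3]|.
Proof.
rewrite card_imset; first by rewrite card_prod card_bool !card_ord.
by move=> [i a] [j b] /= [-> ->].
Qed.

Lemma sym_E : symmetric E.
Proof. by move=> u v; rewrite /E eq_sym [u.1.2 == _]eq_sym. Qed.

Lemma conn_hub (u : V) : connect E u (false, ord0, ord0).
Proof.
case: u => [[s i] a].
have o1 : (1 < 4)%N by []. have o2 : (2 < 4)%N by [].
set i1 := Ordinal o1; set i2 := Ordinal o2.
case: s.
- case: (eqVneq i ord0) => [-> | hi].
  + apply: (@connect_trans _ _ (false, i1, ord0)); first by apply: connect1.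
    apply: (@connect_trans _ _ (true, i2, ord0)); first by apply: connect1.
    by apply: connect1.
  + by apply: connect1; rewrite /E /= hi.
- have [j [hj0 hji]] : exists j : 'I_4, j != ord0 /\ j != i.
    case: (eqVneq i i1) => [-> | h]; first by exists i2.
    by exists i1; split => //; rewrite eq_sym.
  apply: (@connect_trans _ _ (true, j, ord0)); first by apply: connect1; rewrite /E /= eq_sym hji.
  by apply: connect1; rewrite /E /= hj0.
Qed.

Lemma conn : connected_graph E.
Proof.
move=> u v; apply: connect_trans (conn_hub u) _.
by rewrite (sym_connect_sym sym_E); apply: conn_hub.
Qed.

Lemma bigmin_le_seq (I : eqType) (r : seq I) (P : pred I) (F : I -> nat) x j :
  j \in r -> P j -> \big[minn/x]_(i <- r | P i) F i <= F j.
Proof.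
elim: r => // a r IH; rewrite inE big_cons => /orP [/eqP <- -> | jr Pj].
  exact: geq_minl.
case: ifP => _; last exact: IH.
exact: leq_trans (geq_minr _ _) (IH jr Pj).
Qed.

Lemma bigmin_le (I : finType) (P : pred I) (F : I -> nat) x j :
  P j -> \big[minn/x]_(i | P i) F i <= F j.
Proof. by move=> Pj; apply: bigmin_le_seq => //; rewrite mem_index_enum. Qed.

Lemma bigmin_ge (I : finType) (P : pred I) (F : I -> nat) x m :
  m <= x -> (forall i, P i -> m <= F i) -> m <= \big[minn/x]_(i | P i) F i.
Proof.
move=> hx hF; apply: (big_ind (fun y => m <= y)) => //.
by move=> a b ha hb; rewrite leq_min ha hb.
Qed.

Lemma properP (T : finType) (e : rel T) k (c : {ffun T -> 'I_k}) :
  reflect (forall u v, e u v -> c u != c v) (proper_col e c).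
Proof.
apply: (iffP forallP) => [h u v euv | h u].
  by move: (h u) => /forallP /(_ v) /implyP; apply.
by apply/forallP => v; apply/implyP; apply: h.
Qed.

Lemma extendsP (T : finType) k (S : {set T}) (p c : {ffun T -> 'I_k}) :
  reflect (forall x, x \in S -> c x = p x) (extends S p c).
Proof.
apply: (iffP forallP) => [h x xS | h x].
  by move: (h x) => /implyP /(_ xS) /eqP.
by apply/implyP => xS; rewrite h.
Qed.

Lemma chi_E : chi E <= 2.
Proof.
have o : (2 < #|{: V}|.+1)%N by rewrite card_prod card_prod card_bool !card_ord.
apply: leq_trans (bigmin_le _ _ (j := Ordinal o) _) _ => //.
apply/existsP; exists [ffun v : V => if v.1.1 then (ord0 : 'I_2) else ord_max].
apply/properP => u v /andP [h _]; rewrite !ffunE.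
by move: h; case: (u.1.1); case: (v.1.1).
Qed.

Definition S4 : {set V} := [set ((false, i, ord0) : V) | i : 'I_4].
Definition c0 : {ffun V -> 'I_4} := [ffun v : V => v.1.2].

Lemma uniq4 : uniquely_extends E S4 c0.
Proof.
apply/cards1P; exists c0; apply/setP => c; rewrite !inE.
apply/idP/eqP => [/andP [/properP pc /extendsP ec] | ->]; last first.
  apply/andP; split; last by apply/extendsP.
  by apply/properP => u v /andP [_ h]; rewrite !ffunE.
have hR : forall (j : 'I_4) b, c (true, j, b) = j.
  move=> j b; apply/eqP/negPn/negP => h.
  have hu : ((false, c (true, j, b), ord0) : V) \in S4 by apply/imsetP; exists (c (true, j, b)).
  move: (ec _ hu); rewrite ffunE /= => hc.
  have := pc (true, j, b) (false, c (true, j, b), ord0).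
  by rewrite /E /= eq_sym h hc eqxx => /(_ isT).
apply/ffunP => [[[s i] a]]; rewrite ffunE /=.
case: s; first exact: hR.
apply/eqP/negPn/negP => h.
have := pc (false, i, a) (true, c (false, i, a), ord0).
by rewrite /E /= hR eqxx eq_sym h => /(_ isT).
Qed.

Lemma sn4 : sn E 4 <= 4.
Proof.
apply: leq_trans (bigmin_le _ _ (j := S4) _) _.
  by apply/existsP; exists c0; exact: uniq4.
by apply: leq_trans (leq_imset_card _ _) _; rewrite card_ord.
Qed.

Definition NFb (c : {ffun V -> 'I_3}) (v : V) : bool :=
  [exists x, (x != c v) && [forall u, E v u ==> (c u != x)]].

Lemma recolour (S : {set V}) (p c : {ffun V -> 'I_3}) v :
  proper_col E c -> extends S p c -> v \notin S -> NFb c v -> ~~ uniquely_extends E S p.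
Proof.
move=> /properP pc /extendsP ec vS /existsP [x /andP [hx /forallP hN]].
apply/negP => /cards1P [c1 hA].
set c' : {ffun V -> 'I_3} := [ffun w => if w == v then x else c w].
have inA : forall d, proper_col E d -> extends S p d -> d = c1.
  move=> d pd ed; apply/set1P; rewrite -hA inE; by rewrite pd ed.
have e1 : c = c1 by apply: inA; [apply/properP | apply/extendsP].
have e2 : c' = c1.
  apply: inA.
    apply/properP => u w euw; rewrite !ffunE.
    case: (eqVneq u v) => [eu | nu]; case: (eqVneq w v) => [ew | nw].
    - by move: euw; rewrite eu ew /E eqxx.
    - by move: (hN w); rewrite -eu euw /= eq_sym.
    - by move: (hN u); rewrite -ew sym_E euw.
    - exact: pc.
  apply/extendsP => y yS; rewrite ffunE.
  case: (eqVneq y v) => [ey | _]; last exact: ec.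
  by move: vS; rewrite -ey yS.
have : c' v = c v by rewrite e1 e2.
by rewrite ffunE eqxx => hxv; move: hx; rewrite hxv eqxx.
Qed.

Lemma not_NF (c : {ffun V -> 'I_3}) v :
  ~~ NFb c v -> forall x, x != c v -> exists2 u, E v u & c u = x.
Proof.
move=> H x hx; move/existsPn: H => /(_ x); rewrite hx /= => /forallPn [u].
by rewrite negb_imply negbK => /andP [evu /eqP cux]; exists u.
Qed.

Lemma neg_ne (s : bool) : (s != ~~ s).
Proof. by case: s. Qed.

Lemma three (a b d x : 'I_3) : a != x -> b != x -> d != x -> [|| a == b, a == d | b == d].
Proof.
by case: a => [[|[|[|//]]] ?]; case: b => [[|[|[|//]]] ?]; case: d => [[|[|[|//]]] ?];
   case: x => [[|[|[|//]]] ?].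
Qed.
Lemma pig3 (m p1 p2 p3 : 'I_4) (x0 : 'I_3) (f : 'I_4 -> 'I_3) :
  p1 != m -> p2 != m -> p3 != m -> p1 != p2 -> p1 != p3 -> p2 != p3 ->
  (forall q, q != m -> f q != x0) ->
  exists q1, exists q2, [/\ q1 != m, q2 != m, q1 != q2 & f q1 = f q2].
Proof.
move=> h1 h2 h3 h12 h13 h23 h.
case/or3P: (@three (f p1) (f p2) (f p3) x0 (h _ h1) (h _ h2) (h _ h3)) => /eqP e.
- by exists p1, p2.
- by exists p1, p3.
- by exists p2, p3.
Qed.
Lemma pig (m : 'I_4) (x0 : 'I_3) (f : 'I_4 -> 'I_3) :
  (forall q, q != m -> f q != x0) ->
  exists q1, exists q2, [/\ q1 != m, q2 != m, q1 != q2 & f q1 = f q2].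
Proof.
have o0 : (0 < 4)%N by []. have o1 : (1 < 4)%N by [].
have o2 : (2 < 4)%N by []. have o3 : (3 < 4)%N by [].
case: m => [[|[|[|[|//]]]] hm].
- by apply: (@pig3 _ (Ordinal o1) (Ordinal o2) (Ordinal o3)).
- by apply: (@pig3 _ (Ordinal o0) (Ordinal o2) (Ordinal o3)).
- by apply: (@pig3 _ (Ordinal o0) (Ordinal o1) (Ordinal o3)).
- by apply: (@pig3 _ (Ordinal o0) (Ordinal o1) (Ordinal o2)).
Qed.

Lemma nfA (c : {ffun V -> 'I_3}) s m a0 b0 a :
  proper_col E c -> c (s, m, a0) = c (~~ s, m, b0) -> NFb c (s, m, a).
Proof.
move=> /properP pc hx0.
case: (boolP (NFb c (s, m, a))) => // H.
have key := not_NF H.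
have cv : c (s, m, a) = c (s, m, a0).
  apply/eqP/negPn/negP => h.
  have h' : c (s, m, a0) != c (s, m, a) by rewrite eq_sym.
  have [u evu cu] := key (c (s, m, a0)) h'.
  by have := pc (s, m, a0) u evu; rewrite cu eqxx.
have hf : forall q, q != m -> c (s, q, ord0) != c (s, m, a0).
  move=> q hq; rewrite hx0; apply: pc; by rewrite /E /= neg_ne hq.
have [q1 [q2 [h1 h2 h12 hq]]] := pig hf.
have hy : c (s, q1, ord0) != c (s, m, a) by rewrite cv; apply: hf.
have [u evu cu] := key (c (s, q1, ord0)) hy.
move: (evu) => /andP [hs hm].
have adj : forall q, q != u.1.2 -> E (s, q, ord0) u by move=> q hq0; rewrite /E /= hs hq0.
case: (eqVneq u.1.2 q1) => [e1 | n1].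
  have hq2 : q2 != u.1.2 by rewrite e1 eq_sym.
  have := pc _ _ (adj q2 hq2).
  by rewrite cu hq eqxx.
have hq1 : q1 != u.1.2 by rewrite eq_sym.
have := pc _ _ (adj q1 hq1).
by rewrite cu eqxx.
Qed.

Lemma other2 (a b : 'I_3) : exists x : 'I_3, (x != a) && (x != b).
Proof.
have o0 : (0 < 3)%N by []. have o1 : (1 < 3)%N by []. have o2 : (2 < 3)%N by [].
case: a => [[|[|[|//]]] ?]; case: b => [[|[|[|//]]] ?];
  by [exists (Ordinal o0) | exists (Ordinal o1) | exists (Ordinal o2)].
Qed.

Lemma same3 (a b z1 z2 : 'I_3) : z1 != z2 -> a != z1 -> a != z2 -> b != z1 -> b != z2 -> a = b.
Proof.
move=> h12 ha1 ha2 hb1 hb2; apply/eqP.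
by move: h12 ha1 ha2 hb1 hb2; case: a => [[|[|[|//]]] ?]; case: b => [[|[|[|//]]] ?];
   case: z1 => [[|[|[|//]]] ?]; case: z2 => [[|[|[|//]]] ?].
Qed.

Lemma neq_neg (a b : bool) : a != b -> b = ~~ a.
Proof. by case: a; case: b. Qed.

Lemma nfB (c : {ffun V -> 'I_3}) s z :
  (forall r : V, r.1.1 = ~~ s -> c r = z) -> forall v : V, v.1.1 = s -> NFb c v.
Proof.
move=> hz v hv; have [x /andP [hxa hxb]] := other2 (c v) z.
apply/existsP; exists x; rewrite hxa /=; apply/forallP => u; apply/implyP => /andP [h _].
have hu : u.1.1 = ~~ s by rewrite -hv; apply: neq_neg.
by rewrite hz // eq_sym.
Qed.

Lemma big_nf (c : {ffun V -> 'I_3}) : proper_col E c ->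
  exists B : {set V}, 5 <= #|B| /\ forall v, v \in B -> NFb c v.
Proof.
move=> pc; have pc' := elimT (properP E c) pc.
case: (boolP [exists u : V, exists w : V, (u.1.1 != w.1.1) && (c u == c w)]).
  move=> /existsP [[[s m] a0] /existsP [[[s' m'] b0] /andP [/= hs /eqP hc]]].
  have hm : m' = m.
    case: (eqVneq m' m) => // hm.
    by have := pc' (s, m, a0) (s', m', b0); rewrite /E /= hs eq_sym hm hc eqxx => /(_ isT).
  have hs' : s' = ~~ s by apply: neq_neg.
  subst m' s'.
  exists [set ((p.1, m, p.2) : V) | p : bool * 'I_3]; split.
    exact: leq_trans _ (card_idx m).
  move=> v /imsetP [[b a] _ ->] /=.
  case: (eqVneq b s) => [-> | hb]; first exact: nfA hc.
  have hb' : b = ~~ s by apply: neq_neg; rewrite eq_sym.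
  rewrite hb'; apply: (@nfA c (~~ s) m b0 a0) => //.
  by rewrite negbK hc.
move=> /existsPn hno.
have H : forall u w : V, u.1.1 != w.1.1 -> c u != c w.
  move=> u w huw; move: (hno u) => /existsPn /(_ w); by rewrite huw.
set r0 : V := (true, ord0, ord0).
case: (boolP [forall r : V, (r.1.1 == true) ==> (c r == c r0)]).
  move=> /forallP hall.
  exists [set ((false, p.1, p.2) : V) | p : 'I_4 * 'I_3]; split.
    exact: leq_trans _ (card_side false).
  move=> v /imsetP [[i a] _ ->]; apply: (@nfB c false (c r0)) => // r hr.
  by apply/eqP; move: (hall r); rewrite hr eqxx.
move=> /forallPn [r1]; rewrite negb_imply => /andP [/eqP hr1 hc1].
set l0 : V := (false, ord0, ord0).
exists [set ((true, p.1, p.2) : V) | p : 'I_4 * 'I_3]; split.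
  exact: leq_trans _ (card_side true).
move=> v /imsetP [[i a] _ ->]; apply: (@nfB c true (c l0)) => // l hl.
have d : forall x : V, x.1.1 = false -> (c x != c r0) && (c x != c r1).
  move=> x hx; rewrite !H //; by rewrite hx ?hr1.
have /andP [d1 d2] := d l hl.
have /andP [d3 d4] := d l0 erefl.
apply: (same3 _ d1 d2 d3 d4); by rewrite eq_sym.
Qed.

Lemma lower (S : {set V}) (p : {ffun V -> 'I_3}) : #|S| <= 4 -> ~~ uniquely_extends E S p.
Proof.
move=> hS; apply/negP => hU.
have := hU; move=> /cards1P [c hA].
have : c \in [set c : {ffun V -> 'I_3} | proper_col E c && extends S p c] by rewrite hA set11.
rewrite inE => /andP [pc ec].
have [B [hB nf]] := big_nf pc.
have : ~~ (B \subset S).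
  apply/negP => sub; have := subset_leq_card sub => h.
  by have := leq_trans hB (leq_trans h hS).
move=> /subsetPn [v vB vS].
by move: hU; apply/negP; apply: (recolour pc ec vS (nf v vB)).
Qed.

Lemma sn3 : 5 <= sn E 3.
Proof.
apply: bigmin_ge; first by rewrite !card_prod card_bool !card_ord.
move=> S /existsP [p hp]; rewrite leqNgt; apply/negP => hS.
by move: hp; apply/negP; apply: lower.
Qed.

Theorem theorem6 :
  exists (T : finType) (e : rel T) (k : nat),
    [/\ simple_graph e, connected_graph e, bipartite e,
        0 < k /\ chi e <= k - 1 &
        sn e k < sn e (k - 1)].
Proof.
exists V, E, 4; split.
- split; first exact: sym_E.
  by move=> v; rewrite /E eqxx.
- exact: conn.
- by exists (fun v : V => v.1.1) => u v /andP [h _].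
- by split => //; apply: leq_trans chi_E _.
- exact: leq_ltn_trans sn4 sn3.
Qed.
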